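(* Let $\alpha = \frac{P}{4Q}$ where $P$ is an odd integer and $Q$ is a positive integer with $P$ and $Q$ relatively prime, and let $|\phi\rangle \in \mathbb{C}^2$ be any normalized coin state. Then the inhomogeneous quantum walk with parameter $\alpha$ started from $|0,\phi\rangle$ is restricted to the finite interval $[-Q,Q]$: for every time $t \ge 0$ and every $n \in \mathbb{Z}$ with $|n| > Q$, $\Pr(n;t) = 0$.
   Context: The Hilbert space is $\ell^2(\mathbb{Z}) \otimes \mathbb{C}^2$ with orthonormal basis $|n,\xi\rangle = |n\rangle \otimes |\xi\rangle$, $n \in \mathbb{Z}$, $\xi \in \{L,R\}$, where $|L\rangle = (1,0)^T$, $|R\rangle = (0,1)^T$. The shift operator is $W = \sum_n \left( |n-1,L\rangle\langle n,L| + |n+1,R\rangle\langle n,R| \right)$. For $\alpha \in \mathbb{R}$, the coin operator is $C = \sum_n |n\rangle\langle n| \otimes \hat C_n$ with $\hat C_n = \begin{pmatrix} \cos(2\pi\alpha n) & -\sin(2\pi\alpha n) \\ \sin(2\pi\alpha n) & \cos(2\pi\alpha n)\end{pmatrix}$. The one-step evolution of the inhomogeneous quantum walk is $WC$, and starting from $|0,\phi\rangle$ the probability of being at position $n$ at time $t$ is $\Pr(n;t) = \sum_{\xi \in \{L,R\}} |\langle n,\xi| (WC)^t |0,\phi\rangle|^2$. *)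

(* Defs.v *)
From Stdlib Require Import Reals ZArith.
From Coquelicot Require Import Coquelicot.
Open Scope R_scope.

(* A (not necessarily normalized) wave function: position n |-> (amp L, amp R). *)
Definition state := Z -> (C * C)%type.

Definition theta (alpha : R) (n : Z) : R := 2 * PI * alpha * IZR n.

(* One step of the walk, psi |-> W C psi, written in components:
   (W C psi)(n)_L = (C_{n+1} psi(n+1))_L = cos th(n+1) psi_L(n+1) - sin th(n+1) psi_R(n+1)
   (W C psi)(n)_R = (C_{n-1} psi(n-1))_R = sin th(n-1) psi_L(n-1) + cos th(n-1) psi_R(n-1) *)
Definition step (alpha : R) (psi : state) : state := fun n =>
  let up := psi (n + 1)%Z in
  let dn := psi (n - 1)%Z in
  ( Cminus (Cmult (RtoC (cos (theta alpha (n + 1)))) (fst up))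
           (Cmult (RtoC (sin (theta alpha (n + 1)))) (snd up)),
    Cplus  (Cmult (RtoC (sin (theta alpha (n - 1)))) (fst dn))
           (Cmult (RtoC (cos (theta alpha (n - 1)))) (snd dn)) ).

Definition init (phi : C * C) : state := fun n =>
  if Z.eq_dec n 0 then phi else (RtoC 0, RtoC 0).

Definition evol (alpha : R) (phi : C * C) (t : nat) : state :=
  Nat.iter t (step alpha) (init phi).

Definition prob (alpha : R) (phi : C * C) (n : Z) (t : nat) : R :=
  (Cmod (fst (evol alpha phi t n)))^2 + (Cmod (snd (evol alpha phi t n)))^2.

Definition normalized (phi : C * C) : Prop :=
  (Cmod (fst phi))^2 + (Cmod (snd phi))^2 = 1.

(* Main.v *)
Require Import Defs.
From Stdlib Require Import Reals ZArith Lia Lra.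
From Coquelicot Require Import Coquelicot.
Open Scope R_scope.

Lemma z0 : forall a : C, Cmult a (RtoC 0) = RtoC 0.
Proof. intros [x y]; apply injective_projections; simpl; ring. Qed.
Lemma z0l : forall a : C, Cmult (RtoC 0) a = RtoC 0.
Proof. intros [x y]; apply injective_projections; simpl; ring. Qed.
Lemma zm : Cminus (RtoC 0) (RtoC 0) = RtoC 0.
Proof. apply injective_projections; simpl; ring. Qed.
Lemma zp : Cplus (RtoC 0) (RtoC 0) = RtoC 0.
Proof. apply injective_projections; simpl; ring. Qed.

Theorem lemma1 (P Q : Z) (phi : C * C) :
  Z.odd P = true -> (0 < Q)%Z -> Z.gcd P Q = 1%Z -> normalized phi ->
  forall (t : nat) (n : Z), (Z.abs n > Q)%Z ->
    prob (IZR P / (4 * IZR Q)) phi n t = 0.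
Proof.
  intros HP HQ _ _.
  set (alpha := IZR P / (4 * IZR Q)).
  assert (HcQ : cos (theta alpha Q) = 0).
  { apply cos_eq_0_1. destruct (Z.odd_spec P) as [Hs _].
    destruct (Hs HP) as [k Hk]. exists k.
    unfold theta, alpha. rewrite Hk, plus_IZR, mult_IZR.
    assert (IZR Q <> 0) by (apply not_0_IZR; lia). field; auto. }
  assert (HcmQ : cos (theta alpha (- Q)%Z) = 0).
  { unfold theta in *. rewrite opp_IZR.
    replace (2 * PI * alpha * - IZR Q) with (- (2 * PI * alpha * IZR Q)) by ring.
    rewrite cos_neg; auto. }
  assert (Inv : forall t, (forall n, (Z.abs n > Q)%Z -> evol alpha phi t n = (RtoC 0, RtoC 0))
     /\ fst (evol alpha phi t Q) = RtoC 0 /\ snd (evol alpha phi t (- Q)%Z) = RtoC 0).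
  { induction t as [|t [H1 [H2 H3]]].
    - unfold evol, init; simpl. split; [|split].
      + intros n Hn. destruct (Z.eq_dec n 0); [lia|auto].
      + destruct (Z.eq_dec Q 0); [lia|auto].
      + destruct (Z.eq_dec (-Q)%Z 0); [lia|auto].
    - unfold evol in *; simpl Nat.iter. set (psi := Nat.iter t (step alpha) (init phi)) in *.
      split; [|split].
      + intros n Hn. unfold step.
        destruct (Z_lt_le_dec Q (Z.abs (n+1))) as [Ha|Ha];
        destruct (Z_lt_le_dec Q (Z.abs (n-1))) as [Hb|Hb].
        * rewrite (H1 (n+1)%Z), (H1 (n-1)%Z) by lia; simpl.
          rewrite !z0, zm, zp; auto.
        * assert (n - 1 = Q)%Z as E by lia. rewrite (H1 (n+1)%Z) by lia. rewrite E.
          destruct (psi Q) as [a b]; simpl in *. subst a. rewrite HcQ. simpl.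
          rewrite !z0, z0l, zm, zp; auto.
        * assert (n + 1 = - Q)%Z as E by lia. rewrite (H1 (n-1)%Z) by lia. rewrite E.
          destruct (psi (-Q)%Z) as [a b]; simpl in *. subst b. rewrite HcmQ. simpl.
          rewrite !z0, z0l, zm, zp; auto.
        * lia.
      + unfold step; simpl. rewrite (H1 (Q+1)%Z) by lia. simpl. rewrite !z0, zm; auto.
      + unfold step; simpl. rewrite (H1 (-Q-1)%Z) by lia. simpl. rewrite !z0, zp; auto. }
  intros t n Hn. unfold prob. destruct (Inv t) as [H _]. rewrite (H n Hn). simpl.
  rewrite Cmod_0. ring.
Qed.
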